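(* Let $\mathcal C$ be a concept hierarchy, $r_1,r_2,\epsilon\in[0,1]$ with $r_1\le r_2(1-\epsilon)$, $m$ a positive integer, and let $\mathcal A_1$ and $\mathcal H$ be the networks defined below (with $\mathcal H$ having a fixed failed set $F$ satisfying the stated constraint). Then $\mathcal H$ $implements_1$ $\mathcal A_1$: for every $B\subseteq C_0$, in the executions of $\mathcal A_1$ and $\mathcal H$ on input $B$, for every concept $c$, if $rep(c)$ fires at time $level(c)$ in $\mathcal A_1$, then at least $m(1-\epsilon)$ of the neurons in $reps(c)$ fire at time $level(c)$ in $\mathcal H$.
   Context: Concept hierarchies: fix positive integers $\ell_{max},n,k$. A universal set $D$ of concepts is partitioned into disjoint sets $D_0,\dots,D_{\ell_{max}}$ with $|D_0|=n$; $level(c)=\ell$ for $c\in D_\ell$. A concept hierarchy $\mathcal C$ consists of $C\subseteq D$, with $C_\ell=C\cap D_\ell$, and for each $c\in C_\ell$ with $1\le\ell\le\ell_{max}$ a set $children(c)\subseteq C_{\ell-1}$, such that $|C_{\ell_{max}}|=k$, $|children(c)|=k$ for all such $c$, and $children(c)\cap children(c')=\emptyset$ for distinct $c,c'\in C_\ell$. Common network dynamics: neurons partitioned into layers $N_0,\dots,N_{\ell_{max}}$; threshold $\tau$; weights $w(u,v)\in\{0,1\}$ for $u\in N_{\ell-1}$, $v\in N_\ell$. Failed neurons never fire. A non-failed neuron $v\in N_\ell$, $\ell\ge1$, does not fire at time 0 and fires at time $t\ge1$ iff $\sum_{u\in N_{\ell-1}}w(u,v)x_u(t-1)\ge\tau$,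 where $x_u(s)\in\{0,1\}$ indicates whether $u$ fires at time $s$. $\mathcal A_1$: no failures; each $c\in D_0$ has $rep(c)\in N_0$, each $c\in C$ with $level(c)\ge1$ has $rep(c)\in N_{level(c)}$, all distinct; $w(u,v)=1$ iff $v=rep(c)$, $u=rep(c')$ for a child $c'$ of $c$, else $0$; $\tau=r_2k$. Input $B\subseteq C_0$: the layer-0 neurons $rep(b)$, $b\in B$, fire at time 0, no other layer-0 neuron fires at time 0, and no layer-0 neuron fires at any other time. $\mathcal H$: each $c\in D_0$ has a set $reps(c)$ of $m$ neurons in $N_0$, each $c\in C$ with $level(c)\ge1$ a set $reps(c)$ of $m$ neurons in $N_{level(c)}$, all pairwise disjoint; $w(u,v)=1$ iff $v\in reps(c)$ and $u\in reps(c')$ for a child $c'$ of $c$, else $0$; $\tau=r_2km(1-\epsilon)$. A fixed set $F$ of neurons is failed, such that for every concept $c$ at least $m(1-\epsilon)$ neurons of $reps(c)$ are not in $F$. Input $B\subseteq C_0$: a layer-0 neuron fires at time 0 iff it is in $\bigcup_{b\in B}reps(b)\setminus F$, and no layer-0 neuron fires at any other time. *)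

(* Defs.v *)
From mathcomp Require Import all_boot all_order all_algebra.
Set Implicit Arguments. Unset Strict Implicit. Unset Printing Implicit Defensive.
Import Order.TTheory GRing.Theory Num.Theory.
Local Open Scope ring_scope.

Definition universe_ok (D : finType) (lvl : D -> nat) (lmax n : nat) : Prop :=
  (forall c, (lvl c <= lmax)%N) /\ #|[set c | lvl c == 0%N]| = n.

Definition is_hierarchy (D : finType) (lvl : D -> nat) (lmax k : nat)
    (C : {set D}) (children : D -> {set D}) : Prop :=
  [/\ #|[set c in C | lvl c == lmax]| = k,
      (forall c, c \in C -> (1 <= lvl c)%N ->
          children c \subset [set c' in C | lvl c' == (lvl c).-1]),
      (forall c, c \in C -> (1 <= lvl c)%N -> #|children c| = k) &
      (forall c c', c \in C -> c' \in C -> (1 <= lvl c)%N ->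
          lvl c = lvl c' -> c != c' -> [disjoint children c & children c'])].

Definition has_rep (D : finType) (lvl : D -> nat) (C : {set D}) (c : D) : bool :=
  (lvl c == 0%N) || ((c \in C) && (1 <= lvl c)%N).

(* Neurons N with layer function; 0/1 weights w u v (only used for
   u in layer (layer v - 1), v in layer >= 1); real threshold tau;
   failed neurons; input = layer-0 neurons firing at time 0. *)
Fixpoint fires (R : realFieldType) (N : finType) (layer : N -> nat)
    (w : N -> N -> bool) (tau : R) (failed : pred N) (input : pred N)
    (t : nat) : N -> bool :=
  match t with
  | 0 => fun v => ~~ failed v && (layer v == 0%N) && input v
  | t'.+1 => fun v =>
      [&& ~~ failed v, (1 <= layer v)%N &
        tau <= (#|[set u | (layer u == (layer v).-1) && w u v
                          && fires layer w tau failed input t' u]|)%:R]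
  end.

Definition wA1 (D : finType) (lvl : D -> nat) (C : {set D})
    (children : D -> {set D}) (N : finType) (rep : D -> N) (u v : N) : bool :=
  [exists c in C, [&& (1 <= lvl c)%N, v == rep c &
                     [exists c' in children c, u == rep c']]].

Definition firesA1 (R : realFieldType) (D : finType) (lvl : D -> nat)
    (C : {set D}) (children : D -> {set D}) (k : nat) (r2 : R)
    (N : finType) (layer : N -> nat) (rep : D -> N) (B : {set D}) :
    nat -> N -> bool :=
  fires layer (wA1 lvl C children rep) (r2 * k%:R) pred0
        (fun v => [exists b in B, v == rep b]).

Definition wH (D : finType) (lvl : D -> nat) (C : {set D})
    (children : D -> {set D}) (N : finType) (reps : D -> {set N}) (u v : N) :
    bool :=
  [exists c in C, [&& (1 <= lvl c)%N, v \in reps c &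
                     [exists c' in children c, u \in reps c']]].

Definition firesH (R : realFieldType) (D : finType) (lvl : D -> nat)
    (C : {set D}) (children : D -> {set D}) (k m : nat) (r2 eps : R)
    (N : finType) (layer : N -> nat) (reps : D -> {set N}) (F : {set N})
    (B : {set D}) : nat -> N -> bool :=
  fires layer (wH lvl C children reps) (r2 * k%:R * m%:R * (1 - eps))
        (fun v => v \in F) (fun v => [exists b in B, v \in reps b]).

(* Main.v *)
Require Import Defs.
From mathcomp Require Import all_boot all_order all_algebra.
Import Order.TTheory GRing.Theory Num.Theory.
Local Open Scope ring_scope.

Lemma sum_card_disj (I T : finType) (S : {set I}) (G : I -> {set T}) :
  {in S &, forall i j, i != j -> [disjoint G i & G j]} ->
  \sum_(i in S) #|G i| = #|\bigcup_(i in S) G i|.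
Proof.
move=> dis.
pose F i := if i \in S then G i else set0.
have E : \bigcup_(i in S) G i = \bigcup_i F i.
  rewrite [RHS](bigID (mem S)) /=.
  rewrite [X in _ :|: X]big1; last by move=> i /negbTE iS; rewrite /F iS.
  by rewrite setU0; apply: eq_bigr => i iS; rewrite /F iS.
rewrite E -sum1_card.
rewrite (@partition_disjoint_bigcup _ _ _ _ _ F).
  rewrite [RHS](bigID (mem S)) /=.
  rewrite [X in (_ + X)%N]big1; last by move=> i /negbTE iS; rewrite /F iS big_set0.
  by rewrite addn0; apply: eq_bigr => i iS; rewrite /F iS sum1_card.
move=> i j ij; rewrite /F; case: ifP => iS; case: ifP => jS.
- exact: dis.
- by rewrite -setI_eq0 setI0.
- by rewrite -setI_eq0 set0I.
- by rewrite -setI_eq0 set0I.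
Qed.

Theorem theorem7p1
  (R : realFieldType) (lmax n k m : nat)
  (D : finType) (lvl : D -> nat) (C : {set D}) (children : D -> {set D})
  (r1 r2 eps : R)
  (NA : finType) (layerA : NA -> nat) (rep : D -> NA)
  (NH : finType) (layerH : NH -> nat) (reps : D -> {set NH}) (F : {set NH}) :
  (0 < lmax)%N -> (0 < n)%N -> (0 < k)%N -> (0 < m)%N ->
  universe_ok lvl lmax n ->
  is_hierarchy lvl lmax k C children ->
  0 <= r1 <= 1 -> 0 <= r2 <= 1 -> 0 <= eps <= 1 ->
  r1 <= r2 * (1 - eps) ->
  (* network A_1 *)
  (forall v, (layerA v <= lmax)%N) ->
  (forall c, has_rep lvl C c -> layerA (rep c) = lvl c) ->
  {in has_rep lvl C &, injective rep} ->
  (* network H *)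
  (forall v, (layerH v <= lmax)%N) ->
  (forall c, has_rep lvl C c -> #|reps c| = m) ->
  (forall c v, has_rep lvl C c -> v \in reps c -> layerH v = lvl c) ->
  (forall c c', has_rep lvl C c -> has_rep lvl C c' -> c != c' ->
     [disjoint reps c & reps c']) ->
  (forall c, has_rep lvl C c -> m%:R * (1 - eps) <= #|reps c :\: F|%:R) ->
  (* conclusion: H implements_1 A_1 *)
  forall B : {set D}, B \subset [set c in C | lvl c == 0%N] ->
  forall c, has_rep lvl C c ->
    firesA1 lvl C children k r2 layerA rep B (lvl c) (rep c) ->
    m%:R * (1 - eps) <=
      #|[set v in reps c |
          firesH lvl C children k m r2 eps layerH reps F B (lvl c) v]|%:R.
Proof.
move=> lmax0 n0 k0 m0 Hu [HCk Hch Hchk Hdis] /andP[r10 r11] /andP[r20 r21]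
  /andP[e0 e1] r12 layA repl repinj layH repsc repsl repsd repsF B HB.
set fA := firesA1 lvl C children k r2 layerA rep B.
set fH := firesH lvl C children k m r2 eps layerH reps F B.
have hr0 : forall b, b \in B -> has_rep lvl C b.
  move=> b /(subsetP HB); rewrite inE => /andP[_ h]; by rewrite /has_rep h.
have me0 : 0 <= m%:R * (1 - eps) :> R by rewrite mulr_ge0 ?ler0n ?subr_ge0.
have key : forall l c, has_rep lvl C c -> lvl c = l -> fA l (rep c) ->
    m%:R * (1 - eps) <= #|[set v in reps c | fH l v]|%:R.
  elim=> [|l IH] c hc hl.
    rewrite /fA /firesA1 /= => /andP[_ /existsP[b /andP[bB /eqP e]]].
    have cb : c = b by exact: (repinj c b hc (hr0 b bB) e).
    apply: (le_trans (repsF c hc)); rewrite ler_nat; apply: subset_leq_card.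
    apply/subsetP => v; rewrite !inE => /andP[vF vc]; rewrite vc /=.
    rewrite /fH /firesH /= vF (repsl c v hc vc) hl eqxx /=.
    by apply/existsP; exists b; rewrite bB -cb.
  rewrite /fA /firesA1 /= => /andP[_ thA].
  have cC : c \in C by move: hc; rewrite /has_rep hl /= => /andP[].
  pose S := [set c' in children c | fA l (rep c')].
  have hS : r2 * k%:R <= #|S|%:R.
    apply: (le_trans thA); rewrite ler_nat.
    apply: (leq_trans _ (leq_imset_card rep S)); apply: subset_leq_card.
    apply/subsetP => u; rewrite inE => /andP[/andP[_ /existsP[c0 /and3P[c0C c01 /andP[/eqP e /existsP[c' /andP[c'ch /eqP ->]]]]]] fu].
    have cc0 : c = c0.
      by apply: (repinj c c0 hc _ e); rewrite unfold_in /has_rep c0C c01 orbT.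
    by apply/imsetP; exists c' => //; rewrite inE cc0 c'ch /=; exact: fu.
  have hSsub : forall c', c' \in S -> [/\ c' \in C, lvl c' = l & has_rep lvl C c'].
    move=> c'; rewrite inE => /andP[c'ch _].
    have := subsetP (Hch c cC _) c' c'ch; rewrite hl => /(_ isT).
    rewrite inE => /andP[c'C /eqP lc']; split => //.
    by rewrite /has_rep c'C lc' /=; case: (l).
  apply: (le_trans (repsF c hc)); rewrite ler_nat; apply: subset_leq_card.
  apply/subsetP => v; rewrite !inE => /andP[vF vc]; rewrite vc /=.
  rewrite /fH /firesH /= vF (repsl c v hc vc) hl /=.
  set U := \bigcup_(c' in S) [set u in reps c' | fH l u].
  have hU : (\sum_(c' in S) #|[set u in reps c' | fH l u]| <= #|U|)%N.
    rewrite sum_card_disj //.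
    move=> i j iS jS ij.
    have [_ _ hi] := hSsub i iS; have [_ _ hj] := hSsub j jS.
    apply: (disjointW _ _ (repsd i j hi hj ij)); apply/subsetP => x;
      by rewrite inE => /andP[].
  apply: (@le_trans _ _ ((\sum_(c' in S) #|[set u in reps c' | fH l u]|)%:R)); last first.
    rewrite ler_nat (leq_trans hU) //; apply: subset_leq_card.
    apply/subsetP => u /bigcupP[c' c'S]; rewrite inE => /andP[uc' fu].
    have [c'C lc' hc'] := hSsub c' c'S.
    have c'ch : c' \in children c by move: (c'S); rewrite inE => /andP[].
    rewrite inE (repsl c' u hc' uc') lc' eqxx /=.
    apply/andP; split; last exact: fu.
    apply/existsP; exists c; rewrite cC hl vc /=.
    by apply/existsP; exists c'; rewrite c'ch uc'.
  rewrite natr_sum -mulrA.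
  apply: (@le_trans _ _ (#|S|%:R * (m%:R * (1 - eps)))).
    by rewrite ler_wpM2r.
  rewrite mulr_natl -sumr_const; apply: ler_sum => c' c'S.
  have [_ lc' hc'] := hSsub c' c'S.
  apply: IH => //; move: c'S; rewrite inE => /andP[_ ->].
  by [].
move=> c hc; exact: key.
Qed.
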